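(* With notation as in the context, for each $1\le m\le d$ the series $I_m=\sum_{k>dn,\ k\equiv m \pmod d}P_n(k)$ converges and \[ I_m=\sum_{\substack{2\le j\le a\\ j\equiv a\ (\mathrm{mod}\ 2)}}A_j\,\zeta_m(j)-B_m, \] where $A_j=\sum_{l=-n}^nA_{l,j}(n)$ and \[ B_m=\sum_{j=1}^a\sum_{l=-n}^{n}A_{l,j}(n)\Bigl(\frac1{m^j}+\frac1{(d+m)^j}+\cdots+\frac1{(d(n-l-1)+m)^j}\Bigr) \] (the inner sum being over the terms $1/(dk+m)^j$ for $0\le k\le n-l-1$, empty if $l=n$). Consequently, for any real $a_1,\dots,a_d$, $I=\sum_{m=1}^d a_mI_m$ equals $\sum_{2\le j\le a,\,j\equiv a(2)}A_jL(j)-\sum_{m=1}^dB_ma_m$ where $L(s)=\sum_{k\ge1}a_kk^{-s}$ with $a_{k+d}=a_k$.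
   Context: Fix positive integers $d,a,b$ with $a\ge 2b$ and a positive integer $n$. Let $Q_n(t)=\prod_{dn<l\le (d+2b)n}(t-l)(t+l)$, $R_n(t)=\bigl(\prod_{-n\le l\le n}(t-dl)\bigr)^a$, and $P_n(t)=\frac{Q_n(t)}{R_n(t)}((2n)!)^{a-2b}d^{2na}$, with unique partial fraction decomposition $P_n(t)=\sum_{j=1}^{a}\sum_{l=-n}^n A_{l,j}(n)(t-dl)^{-j}$, $A_{l,j}(n)\in\mathbb Q$. For $1\le m\le d$ and $\mathrm{Re}(s)>1$, $\zeta_m(s)=\sum_{k\ge1,\ k\equiv m\ (\mathrm{mod}\ d)}k^{-s}$. *)

(* Defs.v *)
From Stdlib Require Import Reals Lra Lia ZArith Arith ClassicalEpsilon.
Open Scope R_scope.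

Fixpoint sumR (f : nat -> R) (N : nat) : R :=
  match N with O => 0 | S N' => sumR f N' + f N' end.
Fixpoint prodR (f : nat -> R) (N : nat) : R :=
  match N with O => 1 | S N' => prodR f N' * f N' end.

(* value of a series (if it converges; an arbitrary real otherwise) *)
Definition series_value (u : nat -> R) : R :=
  epsilon (inhabits 0) (fun l => infinite_sum u l).

(* Q_n(t) = prod_{dn < l <= (d+2b)n} (t-l)(t+l); l = dn+1+i, i < 2bn *)
Definition Qn (d b n : nat) (t : R) : R :=
  prodR (fun i => (t - INR (d*n + 1 + i)) * (t + INR (d*n + 1 + i))) (2*b*n).

(* R_n(t) = (prod_{-n<=l<=n} (t - d l))^a ; l = i - n, i <= 2n *)
Definition Rn (d a n : nat) (t : R) : R :=
  (prodR (fun i => t - INR d * (INR i - INR n)) (2*n + 1)) ^ a.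

Definition Pn (d a b n : nat) (t : R) : R :=
  Qn d b n t / Rn d a n t * (INR (fact (2*n))) ^ (a - 2*b) * (INR d) ^ (2*n*a).

(* A : Z -> nat -> R gives the partial fraction coefficients A_{l,j}(n):
   P_n(t) = sum_{j=1}^a sum_{l=-n}^n A_{l,j} (t - d l)^{-j} for all t not a pole. *)
Definition is_partial_fraction (d a b n : nat) (A : Z -> nat -> R) : Prop :=
  forall t : R,
    (forall l : Z, (- Z.of_nat n <= l <= Z.of_nat n)%Z -> t <> INR d * IZR l) ->
    Pn d a b n t =
      sumR (fun j0 =>
        sumR (fun i => A (Z.of_nat i - Z.of_nat n)%Z (S j0)
                         / (t - INR d * IZR (Z.of_nat i - Z.of_nat n)) ^ (S j0))
             (2*n + 1))
        a.

Definition Acoef (n : nat) (A : Z -> nat -> R) (j : nat) : R :=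
  sumR (fun i => A (Z.of_nat i - Z.of_nat n)%Z j) (2*n + 1).

(* B_m = sum_{j=1}^a sum_{l=-n}^n A_{l,j} sum_{k=0}^{n-l-1} (dk+m)^{-j};
   with l = i - n, the inner sum has n - l = 2n - i terms. *)
Definition Bcoef (d a n : nat) (A : Z -> nat -> R) (m : nat) : R :=
  sumR (fun j0 =>
    sumR (fun i => A (Z.of_nat i - Z.of_nat n)%Z (S j0) *
                   sumR (fun k => / (INR (d*k + m)) ^ (S j0)) (2*n - i))
         (2*n + 1))
    a.

(* terms of I_m = sum_{k > dn, k = m mod d} P_n(k) *)
Definition Iterm (d a b n m : nat) (k : nat) : R :=
  if andb (Nat.ltb (d*n) k) (Nat.eqb (k mod d) (m mod d)) then Pn d a b n (INR k) else 0.

(* terms of zeta_m(s) = sum_{k>=1, k = m mod d} k^{-s}, s a natural number *)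
Definition zeta_term (d m s : nat) (k : nat) : R :=
  if andb (Nat.leb 1 k) (Nat.eqb (k mod d) (m mod d)) then / (INR k) ^ s else 0.
Definition zeta_m (d m s : nat) : R := series_value (zeta_term d m s).

(* L(s) = sum_{k>=1} a_k k^{-s}, where a_k (k>=1) is the d-periodic extension
   of al 1, ..., al d, i.e. a_k = al (((k-1) mod d) + 1). *)
Definition L_term (d : nat) (al : nat -> R) (s : nat) (k : nat) : R :=
  if Nat.leb 1 k then al (((k - 1) mod d) + 1)%nat / (INR k) ^ s else 0.
Definition Lfun (d : nat) (al : nat -> R) (s : nat) : R := series_value (L_term d al s).

Definition sum_j_parity (a : nat) (F : nat -> R) : R :=
  sumR (fun j => if andb (Nat.leb 2 j) (Nat.eqb (j mod 2) (a mod 2)) then F j else 0) (S a).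

(* Main.v *)
Require Import Defs.
From Stdlib Require Import Reals Lra Lia ZArith Arith ClassicalEpsilon.
Open Scope R_scope.


Lemma sumR_ext f g N : (forall i, (i < N)%nat -> f i = g i) -> sumR f N = sumR g N.
Proof. induction N; simpl; intros H; auto. rewrite IHN by (intros; apply H; lia). rewrite H by lia. auto. Qed.

Lemma sumR_plus f g N : sumR (fun i => f i + g i) N = sumR f N + sumR g N.
Proof. induction N; simpl; [lra|]. rewrite IHN; lra. Qed.

Lemma sumR_minus f g N : sumR (fun i => f i - g i) N = sumR f N - sumR g N.
Proof. induction N; simpl; [lra|]. rewrite IHN; lra. Qed.

Lemma sumR_scal c f N : sumR (fun i => c * f i) N = c * sumR f N.
Proof. induction N; simpl; [lra|]. rewrite IHN; lra. Qed.

Lemma sumR_scal_r c f N : sumR (fun i => f i * c) N = sumR f N * c.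
Proof. induction N; simpl; [lra|]. rewrite IHN; lra. Qed.

Lemma sumR_zero f N : (forall i, (i < N)%nat -> f i = 0) -> sumR f N = 0.
Proof. induction N; simpl; intros H; auto. rewrite IHN by (intros; apply H; lia). rewrite H by lia. lra. Qed.

Lemma sumR_swap (f : nat -> nat -> R) N M :
  sumR (fun i => sumR (fun j => f i j) M) N = sumR (fun j => sumR (fun i => f i j) N) M.
Proof.
  induction N; simpl.
  - symmetry; apply sumR_zero; auto.
  - rewrite IHN. rewrite <- sumR_plus. reflexivity.
Qed.

Lemma sumR_add f N M : sumR f (N + M) = sumR f N + sumR (fun i => f (N + i)%nat) M.
Proof. induction M; simpl. rewrite Nat.add_0_r; lra. rewrite Nat.add_succ_r; simpl. rewrite IHM; lra. Qed.

Lemma sumR_shift f N : sumR f (S N) = f O + sumR (fun i => f (S i)) N.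
Proof. induction N; simpl in *. lra. rewrite IHN. lra. Qed.

Lemma sumR_rev f N : sumR f N = sumR (fun i => f (N - 1 - i)%nat) N.
Proof.
  induction N; auto.
  rewrite (sumR_shift (fun i => f (S N - 1 - i)%nat)). replace (S N - 1 - 0)%nat with N by lia.
  simpl sumR at 1. rewrite IHN. rewrite Rplus_comm. f_equal. apply sumR_ext; intros. f_equal; lia.
Qed.

Lemma sumR_abs f N : Rabs (sumR f N) <= sumR (fun i => Rabs (f i)) N.
Proof. induction N; simpl. rewrite Rabs_R0; lra. eapply Rle_trans. apply Rabs_triang. lra. Qed.

Lemma sumR_le f g N : (forall i, (i < N)%nat -> f i <= g i) -> sumR f N <= sumR g N.
Proof. induction N; simpl; intros H. lra. assert (f N <= g N) by (apply H; lia). assert (sumR f N <= sumR g N) by (apply IHN; intros; apply H; lia). lra. Qed.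

Lemma sumR_single f N i0 : (i0 < N)%nat -> (forall i, (i < N)%nat -> i <> i0 -> f i = 0) -> sumR f N = f i0.
Proof.
  induction N; intros Hi H. lia. simpl.
  destruct (Nat.eq_dec i0 N).
  - subst. rewrite sumR_zero. lra. intros; apply H; lia.
  - rewrite IHN by (try lia; intros; apply H; lia). rewrite (H N) by lia. lra.
Qed.

Lemma sumR_split f N i0 : (i0 < N)%nat ->
  sumR f N = f i0 + sumR (fun i => if Nat.eqb i i0 then 0 else f i) N.
Proof.
  intros Hi. transitivity (sumR (fun i => (if Nat.eqb i i0 then f i else 0) + (if Nat.eqb i i0 then 0 else f i)) N).
  - apply sumR_ext; intros. destruct (Nat.eqb i i0); lra.
  - rewrite sumR_plus. rewrite (sumR_single _ N i0 Hi). rewrite Nat.eqb_refl. auto.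
    intros. apply Nat.eqb_neq in H0. rewrite H0; auto.
Qed.

Lemma sumR_trunc f N J : (J <= N)%nat -> (forall j, (J <= j < N)%nat -> f j = 0) -> sumR f N = sumR f J.
Proof. intros H; induction N; intros H0. replace J with O by lia; auto.
  destruct (Nat.eq_dec J (S N)). subst; auto. simpl. rewrite IHN by (try lia; intros; apply H0; lia).
  rewrite H0 by lia. lra. Qed.

Lemma sum_f_R0_sumR u n : sum_f_R0 u n = sumR u (S n).
Proof. induction n; simpl. lra. rewrite IHn. reflexivity. Qed.

Lemma inf_sum_iff u l : Un_cv (fun N => sumR u N) l -> infinite_sum u l.
Proof.
  intros H eps He. destruct (H eps He) as [N HN]. exists N. intros m Hm.
  rewrite sum_f_R0_sumR. apply HN. lia.
Qed.

Lemma inf_sum_iff2 u l : infinite_sum u l -> Un_cv (fun N => sumR u N) l.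
Proof.
  intros H eps He. destruct (H eps He) as [N HN]. exists (S N). intros m Hm.
  destruct m. lia. rewrite <- sum_f_R0_sumR. apply HN. lia.
Qed.

Lemma series_value_eq u l : infinite_sum u l -> series_value u = l.
Proof.
  intros H. unfold series_value. apply (uniqueness_sum u).
  apply epsilon_spec. exists l; auto. auto.
Qed.

Lemma prodR_ext f g N : (forall i, (i < N)%nat -> f i = g i) -> prodR f N = prodR g N.
Proof. induction N; simpl; intros H; auto. rewrite IHN by (intros; apply H; lia). rewrite H by lia. auto. Qed.

Lemma prodR_le f g N : (forall i, (i < N)%nat -> 0 <= f i <= g i) -> 0 <= prodR f N <= prodR g N.
Proof. induction N; simpl; intros H. lra.
  destruct (H N) as [H1 H2]; [lia|]. destruct IHN as [H3 H4]. intros; apply H; lia.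
  split. apply Rmult_le_pos; lra. apply Rmult_le_compat; lra. Qed.

Lemma prodR_const c N : prodR (fun _ => c) N = c ^ N.
Proof. induction N; simpl; auto. rewrite IHN; ring. Qed.

Lemma prodR_opp f N : prodR (fun i => - f i) N = (-1) ^ N * prodR f N.
Proof. induction N; simpl. ring. rewrite IHN; ring. Qed.

Lemma prodR_shift f N : prodR f (S N) = f O * prodR (fun i => f (S i)) N.
Proof. induction N; simpl in *. lra. rewrite IHN. lra. Qed.

Lemma prodR_rev f N : prodR f N = prodR (fun i => f (N - 1 - i)%nat) N.
Proof.
  induction N; auto.
  rewrite (prodR_shift (fun i => f (S N - 1 - i)%nat)). replace (S N - 1 - 0)%nat with N by lia.
  simpl prodR at 1. rewrite IHN. rewrite Rmult_comm. f_equal. apply prodR_ext; intros. f_equal; lia.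
Qed.

Lemma my_cv_ext u v l : (forall N, u N = v N) -> Un_cv u l -> Un_cv v l.
Proof. intros E H eps He. destruct (H eps He) as [N HN]. exists N; intros; rewrite <- E; auto. Qed.

Lemma Un_cv_const c : Un_cv (fun _ => c) c.
Proof. intros eps He. exists O. intros. unfold Rdist. replace (c - c) with 0 by ring. rewrite Rabs_R0; lra. Qed.

Lemma Un_cv_scal c u l : Un_cv u l -> Un_cv (fun N => c * u N) (c * l).
Proof. intros H. apply CV_mult; auto. apply Un_cv_const. Qed.

Lemma Un_cv_sumR (f : nat -> nat -> R) L K :
  (forall j, (j < K)%nat -> Un_cv (fun N => f j N) (L j)) ->
  Un_cv (fun N => sumR (fun j => f j N) K) (sumR L K).
Proof.
  induction K; intros H; simpl. apply Un_cv_const.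
  apply CV_plus. apply IHK; intros; apply H; lia. apply H; lia.
Qed.

Lemma Un_cv_bound0 u c : (forall N, Rabs (u N) <= c / (INR N + 1)) -> Un_cv u 0.
Proof.
  intros H eps He.
  destruct (archimed (Rabs c / eps)) as [H1 _].
  assert (Hz: (0 <= up (Rabs c / eps))%Z).
  { apply le_IZR. assert (0 <= Rabs c / eps). unfold Rdiv; apply Rmult_le_pos; [apply Rabs_pos| left; apply Rinv_0_lt_compat; lra]. lra. }
  exists (Z.to_nat (up (Rabs c / eps))). intros m Hm. unfold Rdist. rewrite Rminus_0_r.
  eapply Rle_lt_trans. apply H.
  assert (HI: IZR (up (Rabs c / eps)) <= INR m).
  { rewrite <- (Z2Nat.id _ Hz). rewrite <- INR_IZR_INZ. apply le_INR; auto. }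
  assert (0 <= INR m) by apply pos_INR.
  apply Rle_lt_trans with (Rabs c / (INR m + 1)).
  unfold Rdiv. apply Rmult_le_compat_r. left; apply Rinv_0_lt_compat; lra. apply Rle_abs.
  assert (Rabs c / eps * eps = Rabs c) by (field; lra).
  assert (H3: Rabs c / eps < INR m + 1) by lra.
  apply Rmult_lt_compat_r with (r := eps) in H3; [|lra].
  apply Rmult_lt_reg_r with (INR m + 1). lra. unfold Rdiv. rewrite Rmult_assoc, Rinv_l by lra. lra.
Qed.


Fixpoint cnt (d c K : nat) : nat :=
  match K with O => O | S K' => if Nat.eqb K' (d * cnt d c K' + c) then S (cnt d c K') else cnt d c K' end.

Lemma cnt_inv (u : nat -> R) d c : (1 <= d)%nat ->
  (forall k, (forall t, k <> (d*t + c)%nat) -> u k = 0) ->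
  forall K, (K <= d * cnt d c K + c)%nat /\ (forall t, (t < cnt d c K)%nat -> (d*t + c < K)%nat) /\
    sumR u K = sumR (fun t => u (d*t + c)%nat) (cnt d c K).
Proof.
  intros Hd Hu. induction K as [|K [H1 [H2 H3]]].
  - simpl. split; [lia|]. split; [intros; lia| auto].
  - simpl. destruct (Nat.eqb_spec K (d * cnt d c K + c)) as [E|E].
    + split; [rewrite Nat.mul_succ_r; lia|]. split.
      * intros t Ht. assert (t <= cnt d c K)%nat by lia.
        assert (d * t <= d * cnt d c K)%nat by (apply Nat.mul_le_mono_l; auto). lia.
      * simpl. rewrite H3. rewrite <- E. auto.
    + split; [lia|]. split.
      * intros t Ht. specialize (H2 t Ht). lia.
      * rewrite H3. rewrite (Hu K). lra. intros t Ht.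
        destruct (Nat.lt_ge_cases t (cnt d c K)) as [Hl|Hl].
        -- specialize (H2 t Hl). lia.
        -- assert (d * cnt d c K <= d * t)%nat by (apply Nat.mul_le_mono_l; auto). lia.
Qed.

Lemma reindex (u : nat -> R) d c L : (1 <= d)%nat ->
  (forall k, (forall t, k <> (d*t + c)%nat) -> u k = 0) ->
  Un_cv (fun N => sumR (fun t => u (d*t + c)%nat) N) L -> Un_cv (fun K => sumR u K) L.
Proof.
  intros Hd Hu H eps He. destruct (H eps He) as [N0 HN].
  exists (d * N0 + c)%nat. intros K HK.
  destruct (cnt_inv u d c Hd Hu K) as [H1 [_ H3]]. rewrite H3. apply HN.
  destruct (Nat.lt_ge_cases (cnt d c K) N0) as [Hl|Hl]; auto.
  assert (d * cnt d c K < d * N0)%nat by (apply Nat.mul_lt_mono_pos_l; lia). lia.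
Qed.

Lemma modeq d m k : (1 <= m <= d)%nat -> (1 <= k)%nat -> k mod d = m mod d -> exists t, k = (d*t + m)%nat.
Proof.
  intros Hm Hk E. pose proof (Nat.div_mod_eq k d) as Hdm.
  destruct (Nat.eq_dec m d) as [->|Hne].
  - rewrite Nat.Div0.mod_same in E. rewrite E in Hdm.
    destruct (k / d)%nat as [|q] eqn:Q. lia. exists q. lia.
  - rewrite (Nat.mod_small m d) in E by lia. exists (k / d)%nat. lia.
Qed.

Lemma mod_of_form d m t : ((d*t + m) mod d = m mod d)%nat.
Proof. rewrite Nat.mul_comm, Nat.add_comm. apply Nat.Div0.mod_add. Qed.

Definition wt (d m j s : nat) : R := / (INR (d*s + m)) ^ j.

Lemma wt_pos d m j s : (1 <= m)%nat -> 0 < wt d m j s.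
Proof. intros. unfold wt. apply Rinv_0_lt_compat. apply pow_lt. apply lt_0_INR. lia. Qed.

Lemma wt_le2 d m j s : (1 <= d)%nat -> (1 <= m)%nat -> (2 <= j)%nat -> wt d m j s <= 2 / ((INR s + 1) * (INR s + 2)).
Proof.
  intros. unfold wt.
  assert (Hx: INR s + 1 <= INR (d*s + m)).
  { rewrite plus_INR, mult_INR. assert (1 <= INR d) by (apply (le_INR 1); lia). assert (1 <= INR m) by (apply (le_INR 1); lia).
    assert (0 <= INR s) by apply pos_INR. nra. }
  assert (0 <= INR s) by apply pos_INR.
  assert (Hp: (INR s + 1)^2 <= INR (d*s+m) ^ j).
  { apply Rle_trans with (INR (d*s+m) ^ 2). apply pow_incr; lra. apply Rle_pow; auto. lra. }
  apply Rle_trans with (/ (INR s + 1)^2). apply Rinv_le_contravar; auto. apply pow_lt; lra.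
  apply Rmult_le_reg_r with ((INR s + 1)^2 * ((INR s + 1) * (INR s + 2))).
  apply Rmult_lt_0_compat. apply pow_lt; lra. apply Rmult_lt_0_compat; lra.
  field_simplify; try lra. nra.
Qed.

Lemma zsum_bound d m j N : (1 <= d)%nat -> (1 <= m)%nat -> (2 <= j)%nat -> sumR (wt d m j) N <= 2 - 2 / (INR N + 1).
Proof.
  intros. induction N; simpl sumR. simpl. lra.
  pose proof (wt_le2 d m j N H H0 H1). rewrite S_INR.
  assert (0 <= INR N) by apply pos_INR.
  assert (2 / ((INR N + 1) * (INR N + 2)) = 2 / (INR N + 1) - 2 / (INR N + 1 + 1)) by (field; lra).
  lra.
Qed.

Lemma zeta_cv d m j : (1 <= d)%nat -> (1 <= m)%nat -> (2 <= j)%nat -> exists l, Un_cv (fun N => sumR (wt d m j) N) l.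
Proof.
  intros. destruct (growing_cv (fun N => sumR (wt d m j) N)) as [l Hl].
  - intros N. simpl. pose proof (wt_pos d m j N H0). lra.
  - exists 2. intros x [N ->]. pose proof (zsum_bound d m j N H H0 H1).
    assert (0 < 2 / (INR N + 1)). { pose proof (pos_INR N). unfold Rdiv. apply Rmult_lt_0_compat; [lra| apply Rinv_0_lt_compat; lra]. }
    lra.
  - exists l; auto.
Qed.

Lemma zeta_value d m j : (1 <= d)%nat -> (1 <= m <= d)%nat -> (2 <= j)%nat ->
  Un_cv (fun N => sumR (wt d m j) N) (zeta_m d m j).
Proof.
  intros Hd Hm Hj. destruct (zeta_cv d m j Hd ltac:(lia) Hj) as [l Hl].
  unfold zeta_m. rewrite (series_value_eq _ l). auto.
  apply inf_sum_iff. apply (reindex _ d m l Hd).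
  - intros k Hk. unfold zeta_term. destruct (Nat.leb_spec 1 k); simpl; auto.
    destruct (Nat.eqb_spec (k mod d) (m mod d)); auto.
    destruct (modeq d m k Hm H e) as [t Ht]. exfalso; apply (Hk t); auto.
  - eapply my_cv_ext; [|exact Hl]. intros N. apply sumR_ext. intros i _.
    unfold zeta_term, wt. rewrite mod_of_form. rewrite Nat.eqb_refl.
    destruct (Nat.leb_spec 1 (d*i+m)); simpl. auto. lia.
Qed.


Lemma avoid (x : nat -> R) M : forall lo hi, lo < hi -> exists t, lo < t < hi /\ forall i, (i < M)%nat -> t <> x i.
Proof.
  induction M; intros lo hi H.
  - exists ((lo + hi)/2). split. lra. intros; lia.
  - destruct (IHM lo hi H) as [t [Ht Hi]].
    destruct (Req_dec t (x M)) as [E|E].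
    + destruct (IHM lo t ltac:(lra)) as [t' [Ht' Hi']]. exists t'. split. lra.
      intros i Hlt. destruct (Nat.eq_dec i M). subst. lra. apply Hi'; lia.
    + exists t. split; auto. intros i Hlt. destruct (Nat.eq_dec i M). subst; auto. apply Hi; lia.
Qed.

Lemma cont_plus f g x0 : continuity_pt f x0 -> continuity_pt g x0 -> continuity_pt (fun t => f t + g t) x0.
Proof. apply continuity_pt_plus. Qed.
Lemma cont_mult f g x0 : continuity_pt f x0 -> continuity_pt g x0 -> continuity_pt (fun t => f t * g t) x0.
Proof. apply continuity_pt_mult. Qed.
Lemma cont_div f g x0 : continuity_pt f x0 -> continuity_pt g x0 -> g x0 <> 0 -> continuity_pt (fun t => f t / g t) x0.
Proof. apply continuity_pt_div. Qed.
Lemma cont_const c x0 : continuity_pt (fun _ => c) x0.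
Proof. apply continuity_pt_const. intros a b; auto. Qed.
Lemma cont_id x0 : continuity_pt (fun t => t) x0.
Proof. apply derivable_continuous_pt. apply derivable_pt_id. Qed.
Lemma cont_lin y x0 : continuity_pt (fun t => t - y) x0.
Proof. apply continuity_pt_minus. apply cont_id. apply cont_const. Qed.
Lemma cont_pow y p x0 : continuity_pt (fun t => (t - y) ^ p) x0.
Proof. induction p; simpl. apply cont_const. apply cont_mult; auto. apply cont_lin. Qed.
Lemma cont_sumR (g : nat -> R -> R) N x0 : (forall i, (i < N)%nat -> continuity_pt (g i) x0) ->
  continuity_pt (fun t => sumR (fun i => g i t) N) x0.
Proof. induction N; intros H; simpl. apply cont_const. apply cont_plus. apply IHN; intros; apply H; lia. apply H; lia. Qed.

Lemma cont_zero_ext (H : R -> R) x0 (P : R -> Prop) :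
  continuity_pt H x0 ->
  (forall lo hi, lo < hi -> exists t, lo < t < hi /\ P t) ->
  (forall t, P t -> H t = 0) -> H x0 = 0.
Proof.
  intros Hc Hav Hz. destruct (Req_dec (H x0) 0) as [E|E]; auto. exfalso.
  assert (Hp: Rabs (H x0) > 0) by (apply Rabs_pos_lt; auto).
  destruct (Hc _ Hp) as [del [Hdel Hd]].
  destruct (Hav x0 (x0 + del) ltac:(lra)) as [t [Ht Pt]].
  specialize (Hd t). simpl in Hd. unfold Rdist in Hd. rewrite (Hz t Pt) in Hd.
  assert (Rabs (0 - H x0) < Rabs (H x0)).
  { apply Hd. split. split. exact I. lra. rewrite Rabs_right; lra. }
  rewrite Rabs_minus_sym, Rminus_0_r in H0. lra.
Qed.

Lemma pf_unique (x : nat -> R) (M a : nat) (c : nat -> nat -> R) :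
  (forall i i', (i < M)%nat -> (i' < M)%nat -> i <> i' -> x i <> x i') ->
  (forall t, (forall i, (i < M)%nat -> t <> x i) ->
     sumR (fun j0 => sumR (fun i => c i (S j0) / (t - x i) ^ (S j0)) M) a = 0) ->
  forall i j0, (i < M)%nat -> (j0 < a)%nat -> c i (S j0) = 0.
Proof.
  intros Hinj HF.
  assert (Main: forall k, (k <= a)%nat -> forall i j0, (i < M)%nat -> (a - k <= j0 < a)%nat -> c i (S j0) = 0).
  2:{ intros i j0 Hi Hj. apply (Main a); auto; lia. }
  induction k; intros Hk i0 j Hi0 Hj. lia.
  destruct (Nat.eq_dec j (a - S k)) as [Ej|Ej].
  2:{ apply IHk; auto; lia. }
  set (J := S (a - S k)).
  set (x0 := x i0).
  set (H := fun t => sumR (fun j0 => c i0 (S j0) * (t - x0) ^ (J - S j0) +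
       sumR (fun i => if Nat.eqb i i0 then 0 else c i (S j0) * (t - x0) ^ J / (t - x i) ^ (S j0)) M) J).
  assert (HJ : forall t, (forall i, (i < M)%nat -> t <> x i) -> H t = 0).
  { intros t Ht. specialize (HF t Ht).
    rewrite (sumR_trunc _ a J) in HF by (unfold J; try lia; intros jj Hjj; apply sumR_zero; intros ii Hii;
       rewrite (IHk ltac:(lia) ii jj Hii ltac:(lia)); unfold Rdiv; ring).
    assert (Hx0: t - x0 <> 0) by (unfold x0; specialize (Ht i0 Hi0); lra).
    apply (f_equal (fun z => (t - x0) ^ J * z)) in HF. rewrite Rmult_0_r in HF. rewrite <- HF.
    unfold H. rewrite <- sumR_scal. apply sumR_ext. intros jj Hjj.
    rewrite (sumR_split (fun i => c i (S jj) / (t - x i) ^ S jj) M i0 Hi0). rewrite Rmult_plus_distr_l. f_equal.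
    - replace J with ((J - S jj) + S jj)%nat at 2 by lia. rewrite pow_add. unfold x0. field.
      repeat split; try apply pow_nonzero; auto.
    - rewrite <- sumR_scal. apply sumR_ext. intros ii Hii. destruct (Nat.eqb ii i0). ring. unfold Rdiv; ring. }
  assert (Hx0v : H x0 = c i0 J).
  { unfold H. rewrite (sumR_single _ J (a - S k)).
    - rewrite sumR_zero. unfold J. replace (S (a - S k) - S (a - S k))%nat with O by lia. simpl. ring.
      intros ii Hii. destruct (Nat.eqb ii i0); auto. rewrite Rminus_diag. rewrite pow_i. unfold Rdiv; ring. unfold J; lia.
    - unfold J; lia.
    - intros jj Hjj Hne. rewrite Rminus_diag. rewrite pow_i by (unfold J; lia).
      rewrite sumR_zero. ring. intros ii Hii. destruct (Nat.eqb ii i0); [auto|].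
      rewrite pow_i by (unfold J; lia). unfold Rdiv; ring. }
  subst j. fold J. rewrite <- Hx0v.
  apply (cont_zero_ext H x0 (fun t => forall i, (i < M)%nat -> t <> x i)).
  - unfold H. apply cont_sumR. intros jj Hjj. apply cont_plus.
    + apply cont_mult. apply cont_const. apply cont_pow.
    + apply cont_sumR. intros ii Hii. destruct (Nat.eqb_spec ii i0). apply cont_const.
      apply cont_div. apply cont_mult. apply cont_const. apply cont_pow. apply cont_pow.
      apply pow_nonzero. unfold x0. intro E. apply (Hinj i0 ii); auto. lra.
  - intros lo hi Hlh. apply avoid; auto.
  - exact HJ.
Qed.


Definition xp (d n i : nat) : R := INR d * IZR (Z.of_nat i - Z.of_nat n).

Lemma m1pow k : (-1) ^ k = if Nat.eqb (k mod 2) 0 then 1 else -1.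
Proof.
  pose proof (Nat.div_mod_eq k 2). pose proof (Nat.mod_upper_bound k 2 ltac:(lia)).
  destruct (k mod 2) as [|[|]] eqn:E; try lia; simpl.
  - rewrite H, Nat.add_0_r. apply pow_1_even.
  - rewrite H, Nat.add_1_r. apply pow_1_odd.
Qed.

Lemma m1inv k : / ((-1) ^ k) = (-1) ^ k.
Proof. rewrite m1pow. destruct (Nat.eqb (k mod 2) 0). apply Rinv_1. field. Qed.

Lemma xp_rev d n i : (i <= 2*n)%nat -> xp d n (2*n - i) = - xp d n i.
Proof. intros. unfold xp. rewrite Ropp_mult_distr_r, <- opp_IZR. f_equal. f_equal. lia. Qed.

Lemma xp_inj d n i i' : (1 <= d)%nat -> xp d n i = xp d n i' -> i = i'.
Proof.
  intros Hd E. unfold xp in E. apply Rmult_eq_reg_l in E. apply eq_IZR in E. lia.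
  apply not_0_INR. lia.
Qed.

Lemma nonpole_conv d n t : (forall i, (i < 2*n+1)%nat -> t <> xp d n i) ->
  forall l : Z, (- Z.of_nat n <= l <= Z.of_nat n)%Z -> t <> INR d * IZR l.
Proof.
  intros H l Hl. specialize (H (Z.to_nat (l + Z.of_nat n))). unfold xp in H.
  replace (Z.of_nat (Z.to_nat (l + Z.of_nat n)) - Z.of_nat n)%Z with l in H by lia.
  apply H. lia.
Qed.

Lemma Pn_sym d a b n t : Pn d a b n (-t) = (-1)^a * Pn d a b n t.
Proof.
  unfold Pn.
  assert (HQ: Qn d b n (-t) = Qn d b n t).
  { unfold Qn. apply prodR_ext. intros. ring. }
  assert (HR: Rn d a n (-t) = (-1)^a * Rn d a n t).
  { unfold Rn.
    rewrite (prodR_ext _ (fun i => - (t - INR d * (INR (2*n - i) - INR n)))).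
    2:{ intros i Hi. rewrite minus_INR by lia. rewrite mult_INR. simpl INR. ring. }
    rewrite prodR_opp. rewrite (prodR_rev (fun i => t - INR d * (INR i - INR n))).
    replace (2*n+1-1)%nat with (2*n)%nat by lia.
    rewrite Rpow_mult_distr. f_equal.
    replace (2*n+1)%nat with (S (2*n)) by lia. rewrite pow_1_odd. auto. }
  rewrite HQ, HR. unfold Rdiv. rewrite Rinv_mult, m1inv. ring.
Qed.

Definition pfs (d a n : nat) (A : Z -> nat -> R) (t : R) : R :=
  sumR (fun j0 =>
        sumR (fun i => A (Z.of_nat i - Z.of_nat n)%Z (S j0)
                         / (t - INR d * IZR (Z.of_nat i - Z.of_nat n)) ^ (S j0))
             (2*n + 1))
        a.

Lemma HA_use d a b n A t : is_partial_fraction d a b n A ->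
  (forall i, (i < 2*n+1)%nat -> t <> xp d n i) -> Pn d a b n t = pfs d a n A t.
Proof. intros HA H. apply HA. apply nonpole_conv; auto. Qed.

Lemma pfs_neg d a n A t : pfs d a n A (-t) =
  sumR (fun j0 => sumR (fun i => (-1)^(S j0) * A (Z.of_nat n - Z.of_nat i)%Z (S j0)
                         / (t - INR d * IZR (Z.of_nat i - Z.of_nat n)) ^ (S j0)) (2*n + 1)) a.
Proof.
  unfold pfs. apply sumR_ext; intros j0 _. rewrite sumR_rev.
  replace (2*n+1-1)%nat with (2*n)%nat by lia. apply sumR_ext; intros i Hi.
  replace (Z.of_nat (2*n-i) - Z.of_nat n)%Z with (- (Z.of_nat i - Z.of_nat n))%Z by lia.
  replace (Z.of_nat (2*n-(2*n-i)) - Z.of_nat n)%Z with (Z.of_nat i - Z.of_nat n)%Z by lia.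
  replace (Z.of_nat n - Z.of_nat i)%Z with (- (Z.of_nat i - Z.of_nat n))%Z by lia.
  rewrite opp_IZR.
  replace (- t - INR d * - IZR (Z.of_nat i - Z.of_nat n)) with ((-1) * (t - INR d * IZR (Z.of_nat i - Z.of_nat n))) by ring.
  rewrite Rpow_mult_distr. unfold Rdiv. rewrite Rinv_mult, m1inv. ring.
Qed.

Lemma Acoef_rev n A j : sumR (fun i => A (Z.of_nat n - Z.of_nat i)%Z j) (2*n+1) = Acoef n A j.
Proof.
  unfold Acoef. rewrite (sumR_rev (fun i => A (Z.of_nat i - Z.of_nat n)%Z j)).
  apply sumR_ext; intros i Hi. f_equal. lia.
Qed.

Lemma parity d a b n A : (1 <= d)%nat -> is_partial_fraction d a b n A ->
  forall j, (1 <= j <= a)%nat -> ((-1)^j - (-1)^a) * Acoef n A j = 0.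
Proof.
  intros Hd HA.
  set (c := fun i j => (-1)^j * A (Z.of_nat n - Z.of_nat i)%Z j - (-1)^a * A (Z.of_nat i - Z.of_nat n)%Z j).
  assert (Hc: forall i j0, (i < 2*n+1)%nat -> (j0 < a)%nat -> c i (S j0) = 0).
  { apply (pf_unique (xp d n)).
    - intros i i' Hi Hi' Hne E. apply Hne. eapply xp_inj; eauto.
    - intros t Ht.
      assert (Ht': forall i, (i < 2*n+1)%nat -> -t <> xp d n i).
      { intros i Hi E. apply (Ht (2*n - i)%nat). lia. rewrite xp_rev by lia. lra. }
      pose proof (HA_use d a b n A t HA Ht) as E1.
      pose proof (HA_use d a b n A (-t) HA Ht') as E2.
      rewrite Pn_sym, E1, pfs_neg in E2. unfold pfs in E2.
      transitivity (sumR (fun j0 => sumR (fun i => (-1)^(S j0) * A (Z.of_nat n - Z.of_nat i)%Z (S j0)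
                         / (t - INR d * IZR (Z.of_nat i - Z.of_nat n)) ^ (S j0)) (2*n + 1)) a -
          (-1)^a * sumR (fun j0 =>
        sumR (fun i => A (Z.of_nat i - Z.of_nat n)%Z (S j0)
                         / (t - INR d * IZR (Z.of_nat i - Z.of_nat n)) ^ (S j0))
             (2*n + 1)) a).
      2: lra.
      rewrite <- sumR_scal, <- sumR_minus. apply sumR_ext; intros j0 _.
      rewrite <- sumR_scal, <- sumR_minus. apply sumR_ext; intros i _.
      unfold c, xp. unfold Rdiv. ring. }
  intros j Hj. destruct j as [|j0]. lia.
  assert (H0: sumR (fun i => c i (S j0)) (2*n+1) = 0) by (apply sumR_zero; intros; apply Hc; lia).
  unfold c in H0. rewrite sumR_minus, sumR_scal, sumR_scal, Acoef_rev in H0. fold (Acoef n A (S j0)) in H0.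
  lra.
Qed.

Lemma parity_zero d a b n A : (1 <= d)%nat -> is_partial_fraction d a b n A ->
  forall j, (1 <= j <= a)%nat -> Nat.eqb (j mod 2) (a mod 2) = false -> Acoef n A j = 0.
Proof.
  intros Hd HA j Hj Hp. pose proof (parity d a b n A Hd HA j Hj) as H.
  rewrite !m1pow in H. apply Nat.eqb_neq in Hp.
  pose proof (Nat.mod_upper_bound j 2 ltac:(lia)). pose proof (Nat.mod_upper_bound a 2 ltac:(lia)).
  destruct (j mod 2) as [|[|]]; destruct (a mod 2) as [|[|]]; simpl in H; try lia; lra.
Qed.


Lemma Rabs_le_inv x c : Rabs x <= c -> -c <= x <= c.
Proof. unfold Rabs; destruct (Rcase_abs x); lra. Qed.
Lemma Rabs_le x c : -c <= x <= c -> Rabs x <= c.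
Proof. unfold Rabs; destruct (Rcase_abs x); lra. Qed.

Section Growth.
Variables d a b n : nat.
Hypothesis hd : (1 <= d)%nat.
Hypothesis ha : (1 <= a)%nat.
Hypothesis hb : (1 <= b)%nat.
Hypothesis hab : (2*b <= a)%nat.

Definition T0 : R := 2 * INR (d*n + 2*b*n) + 2.

Lemma Q_bound t : T0 <= t -> 0 <= Qn d b n t <= t ^ (4*b*n).
Proof.
  intros Ht. unfold Qn. replace (4*b*n)%nat with (2 * (2*b*n))%nat by lia. rewrite pow_mult, <- prodR_const.
  apply prodR_le. intros i Hi.
  assert (HL: INR (d*n+1+i) <= INR (d*n + 2*b*n)) by (apply le_INR; lia).
  assert (0 <= INR (d*n+1+i)) by apply pos_INR. unfold T0 in Ht. simpl. nra.
Qed.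

Lemma x_bound i : (i < 2*n+1)%nat -> Rabs (INR d * IZR (Z.of_nat i - Z.of_nat n)) <= INR (d*n).
Proof.
  intros Hi. rewrite Rabs_mult, Rabs_right by (apply Rle_ge, pos_INR). rewrite mult_INR.
  apply Rmult_le_compat_l. apply pos_INR. rewrite INR_IZR_INZ. rewrite Rabs_Zabs.
  apply IZR_le. lia.
Qed.

Lemma R_bound t : T0 <= t -> (t/2) ^ ((2*n+1)*a) <= Rn d a n t.
Proof.
  intros Ht. unfold Rn. rewrite pow_mult. apply pow_incr. rewrite <- prodR_const.
  assert (HdnR: INR (d*n) <= INR (d*n + 2*b*n)) by (apply le_INR; lia).
  assert (0 <= INR (d*n)) by apply pos_INR.
  apply prodR_le. intros i Hi. unfold T0 in Ht. split. lra.
  pose proof (x_bound i Hi) as Hx.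
  rewrite minus_IZR, <- !INR_IZR_INZ in Hx. apply Rabs_le_inv in Hx. lra.
Qed.

Definition K0 : R := (INR (fact (2*n))) ^ (a - 2*b) * (INR d) ^ (2*n*a).
Definition K1 : R := 4 * 2 ^ (4*b*n) * K0.

Lemma K0_pos : 0 <= K0.
Proof. unfold K0. apply Rmult_le_pos; apply pow_le; apply pos_INR. Qed.

Lemma P_bound t : T0 <= t -> Rabs (Pn d a b n t) <= K1 / t ^ 2.
Proof.
  intros Ht. assert (HT0: 2 <= T0) by (unfold T0; pose proof (pos_INR (d*n+2*b*n)); lra).
  set (s := t/2). assert (Hs: 1 <= s) by (unfold s; lra).
  destruct (Q_bound t Ht) as [HQ0 HQ]. pose proof (R_bound t Ht) as HR. fold s in HR.
  assert (He: exists r, ((2*n+1)*a = 4*b*n + 2 + r)%nat).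
  { exists ((2*n+1)*a - (4*b*n+2))%nat. nia. }
  destruct He as [r Er]. rewrite Er in HR. rewrite !pow_add in HR.
  assert (Hsr: 1 <= s ^ r) by (apply pow_R1_Rle; lra).
  assert (Hs4: 0 < s ^ (4*b*n)) by (apply pow_lt; lra).
  assert (Htq: t ^ (4*b*n) = 2 ^ (4*b*n) * s ^ (4*b*n)).
  { rewrite <- Rpow_mult_distr. f_equal. unfold s; field. }
  assert (HRpos: 0 < Rn d a n t).
  { eapply Rlt_le_trans; [|exact HR]. apply Rmult_lt_0_compat. apply Rmult_lt_0_compat; auto. apply pow_lt; lra. lra. }
  assert (Hkey: Qn d b n t * t^2 <= 4 * 2^(4*b*n) * Rn d a n t).
  { apply Rle_trans with (t ^ (4*b*n) * t^2). apply Rmult_le_compat_r. apply pow_le; lra. auto.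
    rewrite Htq. replace (t^2) with (4 * s^2) by (unfold s; field).
    apply Rle_trans with (4 * 2 ^ (4*b*n) * (s ^ (4*b*n) * s^2 * s^r)).
    - assert (0 <= 2 ^ (4*b*n)) by (apply pow_le; lra). assert (0 < s^2) by (apply pow_lt; lra).
      assert (0 <= s ^ (4*b*n) * s^2) by (apply Rmult_le_pos; lra).
      replace (2 ^ (4 * b * n) * s ^ (4 * b * n) * (4 * s ^ 2)) with (4 * 2 ^ (4*b*n) * (s ^ (4*b*n) * s^2 * 1)) by ring.
      apply Rmult_le_compat_l. lra. apply Rmult_le_compat_l; lra.
    - apply Rmult_le_compat_l. apply Rmult_le_pos; [lra| apply pow_le; lra]. auto. }
  unfold Pn. fold K0. pose proof K0_pos.
  assert (0 <= Qn d b n t / Rn d a n t) by (unfold Rdiv; apply Rmult_le_pos; [lra| left; apply Rinv_0_lt_compat; lra]).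
  rewrite Rmult_assoc. fold K0. rewrite Rabs_right by (apply Rle_ge, Rmult_le_pos; lra).
  unfold K1. assert (Ht2: 0 < t^2) by (apply pow_lt; lra).
  apply Rmult_le_reg_r with (t^2 * Rn d a n t). apply Rmult_lt_0_compat; lra.
  replace (Qn d b n t / Rn d a n t * K0 * (t ^ 2 * Rn d a n t)) with (Qn d b n t * t^2 * K0) by (field; lra).
  replace (4 * 2 ^ (4 * b * n) * K0 / t ^ 2 * (t ^ 2 * Rn d a n t)) with (4 * 2 ^ (4 * b * n) * Rn d a n t * K0) by (field; lra).
  apply Rmult_le_compat_r; lra.
Qed.

Definition K2 : R := 2 * INR (d*n) + 4.

Lemma term_bound t i j0 : T0 <= t -> (i < 2*n+1)%nat ->
  Rabs (t / (t - INR d * IZR (Z.of_nat i - Z.of_nat n)) ^ (S j0) - (if Nat.eqb j0 0 then 1 else 0)) <= K2 / t.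
Proof.
  intros Ht Hi. assert (HT0: 2 * INR (d*n) + 2 <= T0).
  { unfold T0. assert (INR (d*n) <= INR (d*n+2*b*n)) by (apply le_INR; lia). lra. }
  pose proof (x_bound i Hi) as Hx. set (x := INR d * IZR (Z.of_nat i - Z.of_nat n)) in *.
  apply Rabs_le_inv in Hx. pose proof (pos_INR (d*n)).
  set (y := t - x). assert (Hy: t/2 <= y) by (unfold y; lra). assert (Hy1: 1 <= y) by lra.
  unfold K2. destruct j0 as [|j0]; simpl Nat.eqb.
  - rewrite pow_1. replace (t / y - 1) with (x / y) by (unfold y; field; lra).
    unfold Rdiv. rewrite Rabs_mult, Rabs_inv, (Rabs_right y) by lra.
    apply Rle_trans with (INR (d*n) * / y). apply Rmult_le_compat_r. left; apply Rinv_0_lt_compat; lra.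
    apply Rabs_le; lra.
    apply Rmult_le_reg_r with (t * y). apply Rmult_lt_0_compat; lra.
    replace (INR (d*n) * / y * (t*y)) with (INR (d*n) * t) by (field; lra).
    replace ((2 * INR (d * n) + 4) * / t * (t * y)) with ((2 * INR (d * n) + 4) * y) by (field; lra).
    nra.
  - rewrite Rminus_0_r. assert (Hp: y^2 <= y ^ (S (S j0))) by (apply Rle_pow; auto; lia).
    assert (Hy2: 0 < y^2) by (apply pow_lt; lra).
    assert (0 < t / y ^ S (S j0)) by (unfold Rdiv; apply Rmult_lt_0_compat; [lra| apply Rinv_0_lt_compat; lra]).
    rewrite Rabs_right by lra.
    apply Rle_trans with (t / y^2). unfold Rdiv. apply Rmult_le_compat_l. lra. apply Rinv_le_contravar; lra.
    apply Rmult_le_reg_r with (t * y^2). apply Rmult_lt_0_compat; lra.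
    replace (t / y^2 * (t * y^2)) with (t*t) by (field; lra).
    replace ((2 * INR (d * n) + 4) / t * (t * y^2)) with ((2 * INR (d * n) + 4) * y^2) by (field; lra).
    simpl. nra.
Qed.


Lemma A1_zero A : is_partial_fraction d a b n A -> Acoef n A 1 = 0.
Proof.
  intros HA.
  set (Sabs := sumR (fun j0 => sumR (fun i => Rabs (A (Z.of_nat i - Z.of_nat n)%Z (S j0))) (2*n+1)) a).
  assert (HSabs: 0 <= Sabs).
  { unfold Sabs. rewrite <- (sumR_zero (fun _ => 0) a) by auto. apply sumR_le; intros.
    rewrite <- (sumR_zero (fun _ => 0) (2*n+1)) by auto. apply sumR_le; intros. apply Rabs_pos. }
  assert (HK2: 0 <= K2) by (unfold K2; pose proof (pos_INR (d*n)); lra).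
  assert (HK1: 0 <= K1) by (unfold K1; pose proof K0_pos; apply Rmult_le_pos; [apply Rmult_le_pos; [lra| apply pow_le; lra]|auto]).
  assert (Hb: forall t, T0 <= t -> Rabs (Acoef n A 1) * t <= Sabs * K2 + K1).
  { intros t Ht. assert (HT0: 2 * INR (d*n) + 2 <= T0).
    { unfold T0. assert (INR (d*n) <= INR (d*n+2*b*n)) by (apply le_INR; lia). lra. }
    pose proof (pos_INR (d*n)).
    assert (Hnp: forall i, (i < 2*n+1)%nat -> t <> xp d n i).
    { intros i Hi E. pose proof (x_bound i Hi) as Hx. unfold xp in E. rewrite <- E in Hx.
      apply Rabs_le_inv in Hx. lra. }
    pose proof (HA_use d a b n A t HA Hnp) as E.
    assert (Hdiff: t * pfs d a n A t - Acoef n A 1 =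
      sumR (fun j0 => sumR (fun i => A (Z.of_nat i - Z.of_nat n)%Z (S j0) *
        (t / (t - INR d * IZR (Z.of_nat i - Z.of_nat n)) ^ (S j0) - (if Nat.eqb j0 0 then 1 else 0))) (2*n+1)) a).
    { unfold pfs. rewrite <- sumR_scal.
      replace (Acoef n A 1) with (sumR (fun j0 => if Nat.eqb j0 0 then Acoef n A (S j0) else 0) a).
      2:{ rewrite (sumR_single _ a 0%nat). auto. lia. intros j Hj Hne; apply Nat.eqb_neq in Hne; rewrite Hne; auto. }
      rewrite <- sumR_minus. apply sumR_ext; intros j0 _. unfold Acoef.
      destruct (Nat.eqb j0 0).
      - rewrite <- sumR_scal, <- sumR_minus. apply sumR_ext; intros. unfold Rdiv; ring.
      - rewrite <- sumR_scal, Rminus_0_r. apply sumR_ext; intros. unfold Rdiv; ring. }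
    assert (Hbd: Rabs (t * pfs d a n A t - Acoef n A 1) <= Sabs * K2 / t).
    { rewrite Hdiff. eapply Rle_trans. apply sumR_abs.
      unfold Sabs, Rdiv. rewrite Rmult_assoc, <- sumR_scal_r. apply sumR_le; intros j0 Hj0.
      eapply Rle_trans. apply sumR_abs. rewrite <- sumR_scal_r. apply sumR_le; intros i Hi.
      rewrite Rabs_mult. apply Rmult_le_compat_l. apply Rabs_pos. apply term_bound; auto. }
    assert (HP: Rabs (t * Pn d a b n t) <= K1 / t).
    { rewrite Rabs_mult, Rabs_right by lra. pose proof (P_bound t Ht).
      apply Rle_trans with (t * (K1 / t^2)). apply Rmult_le_compat_l; lra. right. field. lra. }
    rewrite E in HP.
    assert (Rabs (Acoef n A 1) <= Sabs * K2 / t + K1 / t).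
    { replace (Acoef n A 1) with (- (t * pfs d a n A t - Acoef n A 1) + t * pfs d a n A t) by ring.
      eapply Rle_trans. apply Rabs_triang. rewrite Rabs_Ropp. lra. }
    apply Rmult_le_compat_r with (r := t) in H0; [|lra].
    replace ((Sabs * K2 / t + K1 / t) * t) with (Sabs * K2 + K1) in H0 by (field; lra). exact H0. }
  destruct (Req_dec (Acoef n A 1) 0) as [|Hne]; auto. exfalso.
  assert (Hp: 0 < Rabs (Acoef n A 1)) by (apply Rabs_pos_lt; auto).
  assert (HT0: 0 <= T0) by (unfold T0; pose proof (pos_INR (d*n+2*b*n)); lra).
  set (C := Sabs * K2 + K1). assert (0 <= C) by (unfold C; nra).
  specialize (Hb (T0 + C / Rabs (Acoef n A 1) + 1)).
  assert (0 <= C / Rabs (Acoef n A 1)) by (unfold Rdiv; apply Rmult_le_pos; [lra| left; apply Rinv_0_lt_compat; lra]).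
  assert (Rabs (Acoef n A 1) * (T0 + C / Rabs (Acoef n A 1) + 1) = Rabs (Acoef n A 1) * T0 + C + Rabs (Acoef n A 1)) by (field; lra).
  assert (0 <= Rabs (Acoef n A 1) * T0) by (apply Rmult_le_pos; lra).
  fold C in Hb. specialize (Hb ltac:(lra)). lra.
Qed.

End Growth.


Lemma shiftsum (w : nat -> R) s0 N :
  sumR (fun t => w (s0 + t)%nat) N = sumR w N + sumR (fun t => w (N + t)%nat) s0 - sumR w s0.
Proof. pose proof (sumR_add w s0 N). pose proof (sumR_add w N s0). rewrite Nat.add_comm in H. lra. Qed.

Lemma sumpar a (g : nat -> R) : g 1%nat = 0 ->
  (forall j, (1 <= j <= a)%nat -> Nat.eqb (j mod 2) (a mod 2) = false -> g j = 0) ->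
  sumR (fun j0 => g (S j0)) a = sum_j_parity a g.
Proof.
  intros H1 Hp. unfold sum_j_parity. rewrite sumR_shift. simpl (Nat.leb 2 0). rewrite Rplus_0_l.
  apply sumR_ext. intros j0 Hj0.
  destruct j0 as [|j1]. simpl. rewrite H1. auto.
  assert (L: Nat.leb 2 (S (S j1)) = true) by reflexivity. rewrite L. cbn [andb].
  destruct (Nat.eqb (S (S j1) mod 2) (a mod 2)) eqn:E. auto. apply Hp; auto. lia.
Qed.

Lemma wt_cv0 d m j t : (1 <= d)%nat -> (1 <= m)%nat -> (1 <= j)%nat -> Un_cv (fun N => wt d m j (N + t)) 0.
Proof.
  intros Hd Hm Hj. apply (Un_cv_bound0 _ 1). intros N. unfold wt.
  assert (Hx: INR N + 1 <= INR (d*(N+t) + m)).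
  { rewrite <- S_INR. apply le_INR. nia. }
  pose proof (pos_INR N).
  assert (Hp: INR (d*(N+t)+m) <= INR (d*(N+t)+m) ^ j).
  { rewrite <- (pow_1 (INR (d * (N + t) + m))) at 1. apply Rle_pow; auto. lra. }
  rewrite Rabs_right. 2:{ apply Rle_ge; left; apply Rinv_0_lt_compat; apply pow_lt; lra. }
  unfold Rdiv. rewrite Rmult_1_l. apply Rinv_le_contravar; lra.
Qed.

Section Main.
Variables d a b n : nat.
Variable A : Z -> nat -> R.
Hypothesis hd : (1 <= d)%nat.
Hypothesis ha : (1 <= a)%nat.
Hypothesis hb : (1 <= b)%nat.
Hypothesis hab : (2*b <= a)%nat.
Hypothesis hn : (1 <= n)%nat.
Hypothesis HA : is_partial_fraction d a b n A.
Variable m : nat.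
Hypothesis hm : (1 <= m <= d)%nat.

Lemma Iterm_zero k : (forall t, k <> (d*t + (d*n + m))%nat) -> Iterm d a b n m k = 0.
Proof.
  intros H. unfold Iterm. destruct (Nat.ltb_spec (d*n) k); simpl; auto.
  destruct (Nat.eqb_spec (k mod d) (m mod d)); auto. exfalso.
  destruct (modeq d m k hm ltac:(nia) e) as [t' Ht'].
  assert (t' >= n)%nat.
  { destruct (Nat.lt_ge_cases t' n); auto. assert (d * (t'+1) <= d*n)%nat by (apply Nat.mul_le_mono_l; lia). nia. }
  apply (H (t' - n)%nat). rewrite Ht'. replace t' with ((t' - n) + n)%nat at 1 by lia. nia.
Qed.

Lemma P_at t : Iterm d a b n m (d*t + (d*n+m)) =
  sumR (fun j0 => sumR (fun i => A (Z.of_nat i - Z.of_nat n)%Z (S j0) * wt d m (S j0) (2*n - i + t)) (2*n+1)) a.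
Proof.
  unfold Iterm.
  replace (d*t + (d*n+m))%nat with (m + (t + n) * d)%nat by lia.
  rewrite Nat.Div0.mod_add, Nat.eqb_refl.
  destruct (Nat.ltb_spec (d*n) (m + (t+n)*d)); [|lia]. simpl andb.
  rewrite (HA_use d a b n A). 2: exact HA.
  - unfold pfs. apply sumR_ext; intros j0 _. apply sumR_ext; intros i Hi. unfold wt, Rdiv. f_equal. f_equal. f_equal.
    rewrite minus_IZR, <- !INR_IZR_INZ. repeat rewrite ?plus_INR, ?mult_INR. rewrite (minus_INR (2*n) i) by lia. rewrite mult_INR. simpl. ring.
  - intros i Hi E. pose proof (x_bound d a b n hd ha hb hab i Hi) as Hx. unfold xp in E. rewrite <- E in Hx.
    apply Rabs_le_inv in Hx. destruct Hx as [_ Hx].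
    assert (INR (d*n) < INR (m + (t+n)*d)) by (apply lt_INR; lia). lra.
Qed.

Lemma Im_sum : infinite_sum (Iterm d a b n m)
  (sum_j_parity a (fun j => Acoef n A j * zeta_m d m j) - Bcoef d a n A m).
Proof.
  set (E := fun N => sumR (fun j0 => sumR (fun i => A (Z.of_nat i - Z.of_nat n)%Z (S j0) *
             sumR (fun t => wt d m (S j0) (N + t)) (2*n - i)) (2*n+1)) a).
  assert (Hdec: forall N, sumR (fun t => Iterm d a b n m (d*t + (d*n+m))) N =
     sum_j_parity a (fun j => Acoef n A j * sumR (wt d m j) N) + E N - Bcoef d a n A m).
  { intros N. rewrite (sumR_ext _ _ N (fun t _ => P_at t)).
    transitivity (sumR (fun j0 => sumR (fun i => A (Z.of_nat i - Z.of_nat n)%Z (S j0) *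
        sumR (fun t => wt d m (S j0) (2*n-i+t)) N) (2*n+1)) a).
    { rewrite sumR_swap. apply sumR_ext; intros j0 _. rewrite sumR_swap. apply sumR_ext; intros i _. rewrite sumR_scal. auto. }
    rewrite <- (sumpar a (fun j => Acoef n A j * sumR (wt d m j) N)).
    2:{ rewrite (A1_zero d a b n hd ha hb hab A HA). ring. }
    2:{ intros j Hj Hp. rewrite (parity_zero d a b n A hd HA j Hj Hp). ring. }
    unfold E, Bcoef. rewrite <- sumR_plus, <- sumR_minus. apply sumR_ext; intros j0 _.
    unfold Acoef. rewrite <- sumR_scal_r, <- sumR_plus, <- sumR_minus. apply sumR_ext; intros i _.
    rewrite shiftsum. unfold wt. ring. }
  apply inf_sum_iff. apply (reindex _ d (d*n+m)). auto.
  - intros k Hk. apply Iterm_zero. exact Hk.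
  - eapply my_cv_ext. intros N. symmetry. apply Hdec.
    replace (sum_j_parity a (fun j => Acoef n A j * zeta_m d m j) - Bcoef d a n A m) with
      (sum_j_parity a (fun j => Acoef n A j * zeta_m d m j) + 0 - Bcoef d a n A m) by ring.
    apply CV_minus; [|apply Un_cv_const]. apply CV_plus.
    + unfold sum_j_parity. apply Un_cv_sumR. intros j Hj.
      destruct (Nat.leb 2 j && Nat.eqb (j mod 2) (a mod 2))%bool eqn:C.
      * apply Un_cv_scal. apply zeta_value; auto. apply andb_prop in C. destruct C as [C _]. apply Nat.leb_le in C. auto.
      * apply Un_cv_const.
    + unfold E. rewrite <- (sumR_zero (fun _ => 0) a) by auto. apply Un_cv_sumR. intros j0 Hj0.
      rewrite <- (sumR_zero (fun _ => 0) (2*n+1)) by auto. apply Un_cv_sumR. intros i Hi.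
      rewrite <- (Rmult_0_r (A (Z.of_nat i - Z.of_nat n)%Z (S j0))). apply Un_cv_scal.
      rewrite <- (sumR_zero (fun _ => 0) (2*n-i)) by auto. apply Un_cv_sumR. intros t Ht.
      apply wt_cv0; auto; lia.
Qed.
End Main.


Lemma zeta_partial d m j : (1 <= d)%nat -> (1 <= m <= d)%nat -> (2 <= j)%nat ->
  Un_cv (fun K => sumR (zeta_term d m j) K) (zeta_m d m j).
Proof.
  intros Hd Hm Hj. apply (reindex _ d m _ Hd).
  - intros k Hk. unfold zeta_term. destruct (Nat.leb_spec 1 k); simpl; auto.
    destruct (Nat.eqb_spec (k mod d) (m mod d)); auto.
    destruct (modeq d m k Hm H e) as [t Ht]. exfalso; apply (Hk t); auto.
  - eapply my_cv_ext; [|exact (zeta_value d m j Hd Hm Hj)]. intros N. apply sumR_ext. intros i _.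
    unfold zeta_term, wt. rewrite mod_of_form. rewrite Nat.eqb_refl.
    destruct (Nat.leb_spec 1 (d*i+m)); simpl. auto. lia.
Qed.

Lemma mod1d d x : (1 <= x <= d)%nat -> x mod d = (if Nat.eqb x d then 0 else x)%nat.
Proof.
  intros H. destruct (Nat.eqb_spec x d). subst. apply Nat.Div0.mod_same. apply Nat.mod_small. lia.
Qed.

Lemma mod_match d k m0 : (1 <= d)%nat -> (1 <= k)%nat -> (m0 < d)%nat ->
  (k mod d = (S m0) mod d <-> m0 = (k - 1) mod d).
Proof.
  intros Hd Hk Hm. destruct k as [|k']. lia. replace (S k' - 1)%nat with k' by lia.
  replace (S k') with (k' + 1)%nat by lia. rewrite <- Nat.Div0.add_mod_idemp_l.
  pose proof (Nat.mod_upper_bound k' d ltac:(lia)).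
  rewrite (mod1d d (k' mod d + 1)) by lia. rewrite (mod1d d (S m0)) by lia.
  destruct (Nat.eqb_spec (k' mod d + 1) d); destruct (Nat.eqb_spec (S m0) d); lia.
Qed.

Lemma Lterm_dec d al j k : (1 <= d)%nat ->
  L_term d al j k = sumR (fun m0 => al (S m0) * zeta_term d (S m0) j k) d.
Proof.
  intros Hd. unfold L_term, zeta_term. destruct (Nat.leb_spec 1 k); simpl.
  - rewrite (sumR_single _ d ((k-1) mod d)).
    + assert (E: k mod d = S ((k-1) mod d) mod d) by (apply mod_match; auto; apply Nat.mod_upper_bound; lia).
      rewrite E, Nat.eqb_refl. replace ((k-1) mod d + 1)%nat with (S ((k-1) mod d)) by lia. unfold Rdiv. auto.
    + apply Nat.mod_upper_bound; lia.
    + intros i Hi Hne. destruct (Nat.eqb_spec (k mod d) (S i mod d)) as [E|E].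
      * apply (mod_match d k i Hd H Hi) in E. lia.
      * ring.
  - rewrite sumR_zero. auto. intros. ring.
Qed.

Lemma Lfun_dec d al j : (1 <= d)%nat -> (2 <= j)%nat ->
  Lfun d al j = sumR (fun m0 => al (S m0) * zeta_m d (S m0) j) d.
Proof.
  intros Hd Hj. unfold Lfun. apply series_value_eq. apply inf_sum_iff.
  eapply my_cv_ext. intros K. rewrite (sumR_ext _ _ K (fun k _ => eq_sym (Lterm_dec d al j k Hd))). reflexivity.
  eapply my_cv_ext. intros K. rewrite sumR_swap. reflexivity.
  apply Un_cv_sumR. intros m0 Hm0.
  apply (my_cv_ext (fun K => al (S m0) * sumR (zeta_term d (S m0) j) K)).
  intros K. symmetry. apply (sumR_scal (al (S m0)) (zeta_term d (S m0) j)).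
  apply Un_cv_scal. apply zeta_partial; auto; lia.
Qed.


Theorem proposition2p2 (d a b n : nat) (A : Z -> nat -> R)
  (hd : (1 <= d)%nat) (ha : (1 <= a)%nat) (hb : (1 <= b)%nat) (hab : (2*b <= a)%nat)
  (hn : (1 <= n)%nat)
  (HA : is_partial_fraction d a b n A) :
  (forall m : nat, (1 <= m <= d)%nat ->
     infinite_sum (Iterm d a b n m)
       (sum_j_parity a (fun j => Acoef n A j * zeta_m d m j) - Bcoef d a n A m))
  /\
  (forall al : nat -> R,
     sumR (fun m0 => al (S m0) * series_value (Iterm d a b n (S m0))) d
     = sum_j_parity a (fun j => Acoef n A j * Lfun d al j)
       - sumR (fun m0 => Bcoef d a n A (S m0) * al (S m0)) d).
Proof.
  split.
  - intros m Hm. apply Im_sum; auto.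
  - intros al.
    rewrite (sumR_ext _ (fun m0 => al (S m0) * sum_j_parity a (fun j => Acoef n A j * zeta_m d (S m0) j)
                                   - Bcoef d a n A (S m0) * al (S m0))).
    2:{ intros m0 Hm0. rewrite (series_value_eq _ _ (Im_sum d a b n A hd ha hb hab hn HA (S m0) ltac:(lia))). ring. }
    rewrite sumR_minus. f_equal.
    unfold sum_j_parity.
    rewrite (sumR_ext _ (fun m0 => sumR (fun j => al (S m0) * (if (Nat.leb 2 j && Nat.eqb (j mod 2) (a mod 2))%bool
         then Acoef n A j * zeta_m d (S m0) j else 0)) (S a)) d).
    2:{ intros. rewrite sumR_scal. auto. }
    rewrite sumR_swap. apply sumR_ext. intros j Hj.
    destruct (Nat.leb 2 j && Nat.eqb (j mod 2) (a mod 2))%bool eqn:C.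
    + apply andb_prop in C. destruct C as [C _]. apply Nat.leb_le in C.
      rewrite (Lfun_dec d al j hd C). rewrite <- sumR_scal. apply sumR_ext; intros; ring.
    + apply sumR_zero. intros; ring.
Qed.
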